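(* Let $k\ge 2$ be an integer. There exists a combinatorial auction (with bids equal to the true valuations) whose winner set $W$ has $|W|=k$ and which has a unique MRC outcome $\pi^{MRC}$, such that $\pi^{MRC}$ gives utility $0$ to exactly $k-2$ winners, while for each of these $k-2$ winners $i$ there exists a core outcome $\pi\in U$ with $\pi_i>0$.
   Context: A combinatorial auction (CA) has a finite set of bidders $N=\{1,\dots,n\}$, a finite set of items $M$, and for each bidder $i$ a valuation $v_i:2^M\to\mathbb{R}_{\ge 0}$ with $v_i(\emptyset)=0$. For $S\subseteq N$ let $w(S)=\max\{\sum_{i\in S}v_i(a_i): a_i\subseteq M,\ a_i\cap a_j=\emptyset\ (i\ne j)\}$ (with $w(\emptyset)=0$). Fix an allocation $(a^*_i)_{i\in N}$ attaining $w(N)$; the winner set is $W=\{i: a^*_i\neq\emptyset\}$. A utility outcome is a vector $\pi\in\mathbb{R}^N$ (bidder $i$ pays $v_i(a^*_i)-\pi_i$). The core is $U=\{\pi\in\mathbb{R}^N:\ \pi_i\ge 0\ \forall i\in N,\ \sum_{i\in N\setminus S}\pi_i\le w(N)-w(S)\ \forall S\subseteq N\}$. An MRC (minimum-revenue-core) outcome is a $\pi\in U$ maximizing $\sum_{i\in N}\pi_i$ over $U$. *)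

(* Defs.v *)
From HB Require Import structures.
From mathcomp Require Import all_boot all_order all_algebra.
From mathcomp Require Export reals.
Set Implicit Arguments. Unset Strict Implicit. Unset Printing Implicit Defensive.
Import Order.TTheory GRing.Theory Num.Theory.
Local Open Scope ring_scope.

Section CA.
Variables (R : realFieldType) (n m : nat).
Implicit Types (v : 'I_n -> {set 'I_m} -> R) (a : {ffun 'I_n -> {set 'I_m}})
  (S : {set 'I_n}) (pi : {ffun 'I_n -> R}).

Definition valuation_profile v : Prop :=
  (forall i A, 0 <= v i A) /\ (forall i, v i set0 = 0).

Definition feasible a : bool :=
  [forall i, forall j, (i != j) ==> [disjoint a i & a j]].

(* w(S) = max over feasible allocations of sum_{i in S} v_i(a_i);
   the max with 0 is harmless since the empty allocation is feasible and
   valuations are nonnegative; bidders outside S may be given the empty bundle. *)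
Definition wS v S : R :=
  \big[Num.max/0]_(a | feasible a) \sum_(i in S) v i (a i).

Definition efficient v a : Prop :=
  feasible a /\ \sum_(i : 'I_n) v i (a i) = wS v setT.

Definition winners a : {set 'I_n} := [set i | a i != set0].

Definition in_core v pi : Prop :=
  (forall i, 0 <= pi i) /\
  (forall S : {set 'I_n}, \sum_(i in ~: S) pi i <= wS v setT - wS v S).

Definition MRC v pi : Prop :=
  in_core v pi /\ (forall pi', in_core v pi' -> \sum_i pi' i <= \sum_i pi i).

Definition unique_MRC v pi : Prop :=
  MRC v pi /\ (forall pi', MRC v pi' -> pi' = pi).

End CA.

(* Main.v *)
Require Import Defs.
From HB Require Import structures.
From mathcomp Require Import all_boot all_order all_algebra.
From mathcomp Require Import reals.
From mathcomp Require Import lra zify.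
Import Order.TTheory GRing.Theory Num.Theory.
Local Open Scope ring_scope.

Section Gen.
Variables (R : realFieldType) (n m : nat).
Variable v : 'I_n -> {set 'I_m} -> R.
Hypothesis vp : valuation_profile v.

Lemma wS_ge (S : {set 'I_n}) (b : {ffun 'I_n -> {set 'I_m}}) :
  feasible b -> \sum_(i in S) v i (b i) <= wS v S.
Proof. by move=> fb; rewrite /wS; apply: (le_bigmax_cond _ _ fb). Qed.

Lemma wS_le (S : {set 'I_n}) B : 0 <= B ->
  (forall b, feasible b -> \sum_(i in S) v i (b i) <= B) -> wS v S <= B.
Proof. by move=> B0 H; rewrite /wS; apply: bigmax_le. Qed.

Lemma disj_sum (b : {ffun 'I_n -> {set 'I_m}}) (p : 'I_m -> R) :
  feasible b -> (forall x, 0 <= p x) ->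
  \sum_j \sum_(x in b j) p x <= \sum_x p x.
Proof.
move=> fb p0.
rewrite (exchange_big_dep predT) //=.
apply: ler_sum => x _.
case: (boolP [exists j, x \in b j]) => [/existsP [j0 hj0]|].
  rewrite (bigD1 j0) //= big1 ?addr0 // => j /andP [hj hne].
  have := fb; move/forallP/(_ j)/forallP/(_ j0); rewrite hne /=.
  by move/disjointFr => /(_ x hj); rewrite hj0.
move/existsPn => H; rewrite big1 // => j hj; by have := H j; rewrite hj.
Qed.

Lemma lp_bound (b : {ffun 'I_n -> {set 'I_m}}) (T : {set 'I_n}) (p : 'I_m -> R) :
  feasible b -> (forall x, 0 <= p x) ->
  (forall j X, j \in T -> v j X <= \sum_(x in X) p x) ->
  \sum_(j in T) v j (b j) <= \sum_x p x.
Proof.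
move=> fb p0 H.
apply: (le_trans _ (@disj_sum b p fb p0)).
apply: (@le_trans _ _ (\sum_(j in T) \sum_(x in b j) p x)).
  by apply: ler_sum => j hj; apply: H.
rewrite [X in _ <= X](bigID (mem T)) /= lerDl.
by apply: sumr_ge0 => j _; apply: sumr_ge0.
Qed.

Lemma sum_sub (f : 'I_n -> R) (S T : {set 'I_n}) :
  (forall j, 0 <= f j) -> S \subset T -> \sum_(j in S) f j <= \sum_(j in T) f j.
Proof.
move=> f0 sST; rewrite [X in _ <= X](bigID (mem S)) /=.
have -> : \sum_(i in T | i \in S) f i = \sum_(i in S) f i.
  by apply: eq_bigl => i; rewrite andb_idl // => /(subsetP sST).
by rewrite lerDl; apply: sumr_ge0.
Qed.

End Gen.

Lemma sum_ind (R : realFieldType) (T : finType) (A E : {set T}) (c : R) :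
  \sum_(x in A) (if x \in E then c else 0) = c *+ #|A :&: E|.
Proof. by rewrite -big_mkcondr /= -sumr_const; apply: eq_bigl => x; rewrite !inE. Qed.

Lemma sum_subT (R : realFieldType) (T : finType) (f : T -> R) (S U : {set T}) :
  (forall j, 0 <= f j) -> S \subset U -> \sum_(j in S) f j <= \sum_(j in U) f j.
Proof.
move=> f0 sST; rewrite [X in _ <= X](bigID (mem S)) /=.
have -> : \sum_(i in U | i \in S) f i = \sum_(i in S) f i.
  by apply: eq_bigl => i; rewrite andb_idl // => /(subsetP sST).
by rewrite lerDl; apply: sumr_ge0.
Qed.

Arguments sum_ind {R T}.
Arguments sum_subT {R T f S U}.

Section Constr.
Variables (R : realFieldType) (k : nat).
Hypothesis hk : (2 <= k)%N.

Definition Wset : {set 'I_k.+2} := [set x : 'I_k.+2 | (x < k)%N].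
Definition i0 : 'I_k.+2 := ord0.
Definition i1 : 'I_k.+2 := @Ordinal k.+2 1 isT.
Definition iA : 'I_k.+2 := @Ordinal k.+2 k (leqnSn k.+1).
Definition iB : 'I_k.+2 := ord_max.

Lemma inW j : (j \in Wset) = (j != iA) && (j != iB).
Proof.
rewrite inE; case: j => j hj; rewrite -!val_eqE /=.
apply/idP/andP => [h|[h1 h2]]; first by split; apply/eqP; lia.
by move/eqP: h1; move/eqP: h2 => h2 h1; lia.
Qed.

Lemma i0W : i0 \in Wset. Proof. by rewrite inE /=; lia. Qed.
Lemma i1W : i1 \in Wset. Proof. by rewrite inE /=; lia. Qed.
Lemma i01 : i0 != i1. Proof. by rewrite -val_eqE. Qed.
Lemma iAB : iA != iB. Proof. by rewrite -val_eqE /=; apply/eqP; lia. Qed.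
Lemma i0A : i0 != iA. Proof. by rewrite -val_eqE /=; apply/eqP; lia. Qed.
Lemma i1A : i1 != iA. Proof. by rewrite -val_eqE /=; apply/eqP; lia. Qed.
Lemma i0B : i0 != iB. Proof. by rewrite -val_eqE /=; apply/eqP; lia. Qed.
Lemma i1B : i1 != iB. Proof. by rewrite -val_eqE /=; apply/eqP; lia. Qed.

Lemma cardW : #|Wset| = k.
Proof.
have -> : Wset = ~: [set iA; iB].
  by apply/setP => j; rewrite inW !inE negb_or.
by have := cardsC [set iA; iB]; rewrite cards2 iAB card_ord /= => /eqP; rewrite -[k.+2]/(2 + k)%N eqn_add2l => /eqP ->.
Qed.

Definition Aset := Wset :\ i1.
Definition Bset := Wset :\ i0.

Lemma cardA : #|Aset| = k.-1.
Proof. rewrite /Aset; have := cardsD1 i1 Wset; rewrite i1W cardW /= => h; by rewrite [in RHS]h. Qed.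
Lemma cardB : #|Bset| = k.-1.
Proof. rewrite /Bset; have := cardsD1 i0 Wset; rewrite i0W cardW /= => h; by rewrite [in RHS]h. Qed.

Definition alpha : R := k%:R - 3 / 2.

Definition vv (j : 'I_k.+2) (X : {set 'I_k.+2}) : R :=
  if j \in Wset then (if j \in X then 1 else 0)
  else if j == iA then (if Aset \subset X then alpha else 0)
  else (if Bset \subset X then alpha else 0).

Lemma alpha_ge0 : 0 <= alpha.
Proof.
rewrite /alpha; have : 2%:R <= k%:R :> R by rewrite ler_nat.
move=> h; lra.
Qed.

Lemma vv_ge0 j (X : {set 'I_k.+2}) : 0 <= vv j X.
Proof. rewrite /vv; have := alpha_ge0; by repeat case: ifP. Qed.

Lemma vp : valuation_profile vv.
Proof.
split; first exact: vv_ge0.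
move=> j; rewrite /vv inE.
have hA : Aset \subset set0 = false.
  by apply/negbTE/negP => /subsetP /(_ i0); rewrite /Aset in_setD1 i0W eq_sym i01 in_set0; move/(_ isT).
have hB : Bset \subset set0 = false.
  by apply/negbTE/negP => /subsetP /(_ i1); rewrite /Bset in_setD1 i1W i01 in_set0; move/(_ isT).
by rewrite in_set0 hA hB; repeat case: ifP.
Qed.

Definition price (E : {set 'I_k.+2}) (x : 'I_k.+2) : R :=
  if x \in Wset then 1 - (if x \in E then 1/2 else 0) else 0.

Lemma price_ge0 (E : {set 'I_k.+2}) x : 0 <= price E x.
Proof. rewrite /price; case: ifP => // _; case: ifP => _; lra. Qed.

Lemma sum_price_sub (E : {set 'I_k.+2}) (A : {set 'I_k.+2}) : A \subset Wset ->
  \sum_(x in A) price E x = #|A|%:R - (1/2) *+ #|A :&: E|.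
Proof.
move=> sA.
have -> : (#|A|%:R : R) = \sum_(x in A) (1:R) by rewrite sumr_const.
rewrite -(sum_ind A E (1/2 : R)) -sumrB.
by apply: eq_bigr => x /(subsetP sA) hx; rewrite /price hx.
Qed.

Lemma sum_price (E : {set 'I_k.+2}) : E \subset Wset -> \sum_x price E x = k%:R - (1/2) *+ #|E|.
Proof.
move=> sE.
rewrite (bigID (mem Wset)) /= [X in _ + X]big1 ?addr0; last first.
  by move=> x /negbTE hx; rewrite /price hx.
rewrite sum_price_sub // cardW; congr (_ - _ *+ _).
by apply/eq_card => x; rewrite inE andb_idl // => /(subsetP sE).
Qed.

Lemma vbound (E X : {set 'I_k.+2}) j : E \subset Wset -> (#|Aset :&: E| <= 1)%N ->
  (#|Bset :&: E| <= 1)%N -> j \notin E -> vv j X <= \sum_(x in X) price E x.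
Proof.
move=> sE cA cB jE.
rewrite /vv; case: ifP => jW.
  case: ifP => jX; last by apply: sumr_ge0 => x _; apply: price_ge0.
  have sjX : [set j] \subset X by rewrite sub1set.
  apply: (le_trans _ (sum_subT (price_ge0 E) sjX)).
  by rewrite big_set1 /price jW (negbTE jE) subr0.
have key : forall A : {set 'I_k.+2}, A \subset Wset -> #|A| = k.-1 ->
   (#|A :&: E| <= 1)%N -> A \subset X -> alpha <= \sum_(x in X) price E x.
  move=> A sA cA' cAE sAX.
  apply: (le_trans _ (sum_subT (price_ge0 E) sAX)).
  rewrite sum_price_sub // cA' -mulr_natr.
  have : (#|A :&: E|%:R : R) <= 1 by rewrite (ler_nat R _ 1).
  have : (k.-1%:R : R) = k%:R - 1 by rewrite -[in RHS](prednK (ltnW hk)) -natr1 addrK.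
  rewrite /alpha; move=> -> h; lra.
case: ifP => _; case: ifP => hs; try by apply: sumr_ge0 => x _; apply: price_ge0.
  apply: (key Aset) => //; [exact: subsetDl | exact: cardA].
apply: (key Bset) => //; [exact: subsetDl | exact: cardB].
Qed.


Lemma sum_if (T : finType) (E : {set T}) (c : R) :
  \sum_(x : T) (if x \in E then c else 0) = c *+ #|E|.
Proof. by rewrite -big_mkcond /= sumr_const. Qed.

Lemma disj0l (A : {set 'I_k.+2}) : [disjoint set0 & A].
Proof. by rewrite -setI_eq0 set0I. Qed.
Lemma disj0r (A : {set 'I_k.+2}) : [disjoint A & set0].
Proof. by rewrite -setI_eq0 setI0. Qed.

Definition astar : {ffun 'I_k.+2 -> {set 'I_k.+2}} :=
  [ffun j => if j \in Wset then [set j] else set0].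

Lemma feas_astar : feasible astar.
Proof.
apply/forallP => i; apply/forallP => j; apply/implyP => hij; rewrite !ffunE.
case: ifP => _; case: ifP => _;
  [by rewrite disjoints1 in_set1 | exact: disj0r | exact: disj0l | exact: disj0l].
Qed.

Lemma vastar j : vv j (astar j) = if j \in Wset then 1 else 0.
Proof.
rewrite /vv ffunE; case hj: (j \in Wset); first by rewrite set11.
have hA : Aset \subset set0 = false.
  by apply/negbTE/negP => /subsetP /(_ i0); rewrite /Aset in_setD1 i0W eq_sym i01 in_set0; move/(_ isT).
have hB : Bset \subset set0 = false.
  by apply/negbTE/negP => /subsetP /(_ i1); rewrite /Bset in_setD1 i1W i01 in_set0; move/(_ isT).
by rewrite hA hB; case: ifP.
Qed.

Lemma sum_astar (S : {set 'I_k.+2}) :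
  \sum_(j in S) vv j (astar j) = 1 *+ #|S :&: Wset|.
Proof. by rewrite -sum_ind; apply: eq_bigr => j _; rewrite vastar. Qed.

Lemma bound_S (E S : {set 'I_k.+2}) (b : {ffun 'I_k.+2 -> {set 'I_k.+2}}) :
  E \subset Wset -> (#|Aset :&: E| <= 1)%N -> (#|Bset :&: E| <= 1)%N ->
  feasible b -> S \subset ~: E ->
  \sum_(j in S) vv j (b j) <= k%:R - (1/2) *+ #|E|.
Proof.
move=> sE cA cB fb sS.
apply: (le_trans (sum_subT (fun j => vv_ge0 j (b j)) sS)).
rewrite -sum_price //; apply: (@lp_bound R k.+2 k.+2 vv) => //.
  exact: price_ge0.
by move=> j X; rewrite inE => jE; apply: vbound.
Qed.

Lemma wS_bound (E S : {set 'I_k.+2}) :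
  E \subset Wset -> (#|Aset :&: E| <= 1)%N -> (#|Bset :&: E| <= 1)%N ->
  S \subset ~: E -> wS vv S <= k%:R - (1/2) *+ #|E|.
Proof.
move=> sE cA cB sS; apply: (@wS_le R k.+2 k.+2 vv).
  have : (#|E| <= k)%N by apply: (leq_trans (subset_leq_card sE)); rewrite cardW.
  rewrite -(ler_nat R) -mulr_natr => h.
  have : 0 <= (#|E|%:R : R) by [].
  move=> h0; lra.
by move=> b fb; apply: bound_S.
Qed.

Lemma wN : wS vv setT = k%:R.
Proof.
apply/eqP; rewrite eq_le; apply/andP; split.
  have := @wS_bound set0 setT; rewrite cards0 mulr0n subr0; apply.
  - exact: sub0set.
  - by rewrite setI0 cards0.
  - by rewrite setI0 cards0.
  - by rewrite setC0.
apply: le_trans (@wS_ge R k.+2 k.+2 vv setT astar feas_astar).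
by rewrite sum_astar setTI cardW.
Qed.

Definition piF (F : {set 'I_k.+2}) : {ffun 'I_k.+2 -> R} :=
  [ffun j => if j \in F then 1/2 else 0].

Lemma core_piF (F : {set 'I_k.+2}) : F \subset Wset ->
  (#|Aset :&: F| <= 1)%N -> (#|Bset :&: F| <= 1)%N -> in_core vv (piF F).
Proof.
move=> sF cA cB; split.
  by move=> i; rewrite ffunE; case: ifP => _; lra.
move=> S.
have -> : \sum_(i in ~: S) piF F i = (1/2) *+ #|~: S :&: F|.
  by rewrite -sum_ind; apply: eq_bigr => i _; rewrite ffunE.
have h := @wS_bound (~: S :&: F) S.
rewrite wN.
have : wS vv S <= k%:R - (1/2) *+ #|~: S :&: F|.
  apply: h.
  - exact: subset_trans (subsetIr _ _) sF.
  - apply: leq_trans cA; apply: subset_leq_card; apply: setIS; exact: subsetIr.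
  - apply: leq_trans cB; apply: subset_leq_card; apply: setIS; exact: subsetIr.
  - by apply/subsetP => x xS; rewrite !inE xS.
move=> h2; lra.
Qed.

Definition F0 : {set 'I_k.+2} := [set i0; i1].
Definition piM := piF F0.

Lemma sum_piF (F : {set 'I_k.+2}) : \sum_j piF F j = (1/2) *+ #|F|.
Proof. by rewrite -sum_if; apply: eq_bigr => j _; rewrite ffunE. Qed.

Lemma sum_piM : \sum_j piM j = 1.
Proof. by rewrite sum_piF cards2 i01 /= mulr2n; lra. Qed.

Lemma core_piM : in_core vv piM.
Proof.
apply: core_piF.
- by apply/subsetP => x; rewrite in_set2 => /orP [] /eqP ->; [exact: i0W | exact: i1W].
- rewrite -(cards1 i0); apply: subset_leq_card; apply/subsetP => x.
  rewrite in_setI in_set2 in_set1 /Aset in_setD1.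
  by case/andP => [/andP [h _] /orP [//|/eqP e]]; rewrite e eqxx in h.
- rewrite -(cards1 i1); apply: subset_leq_card; apply/subsetP => x.
  rewrite in_setI in_set2 in_set1 /Bset in_setD1.
  by case/andP => [/andP [h _] /orP [/eqP e|//]]; rewrite e eqxx in h.
Qed.


Definition Z : {set 'I_k.+2} := Wset :\ i0 :\ i1.

Lemma decomp (f : 'I_k.+2 -> R) :
  \sum_j f j = f i0 + f i1 + f iA + f iB + \sum_(j in Z) f j.
Proof.
rewrite (bigD1 i0) // (bigD1 i1) //=.
rewrite (bigD1 iA) /=; last by rewrite !(eq_sym iA) i0A i1A.
rewrite (bigD1 iB) /=; last by rewrite !(eq_sym iB) ?i0B ?i1B ?iAB.
rewrite !addrA; congr (_ + _); apply: eq_bigl => j.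
rewrite /Z !in_setD1 inW.
by case: (j != i0); case: (j != i1); case: (j != iA); case: (j != iB).
Qed.

Definition feas2 (x y : 'I_k.+2) (X Y : {set 'I_k.+2}) : {ffun 'I_k.+2 -> {set 'I_k.+2}} :=
  [ffun j => if j == x then X else if j == y then Y else set0].

Lemma feasible2 (x y : 'I_k.+2) (X Y : {set 'I_k.+2}) : x != y -> [disjoint X & Y] -> feasible (feas2 x y X Y).
Proof.
move=> xy dXY.
apply/forallP => i; apply/forallP => j; apply/implyP => hij; rewrite !ffunE.
case: (eqVneq i x) => [ex|nx]; case: (eqVneq j x) => [ey|ny].
- by rewrite ex ey eqxx in hij.
- case: (eqVneq j y) => _; [by [] | exact: disj0r].
- case: (eqVneq i y) => _; [by rewrite disjoint_sym | exact: disj0l].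
- case: (eqVneq i y) => [e1|_]; case: (eqVneq j y) => [e2|_].
  + by rewrite e1 e2 eqxx in hij.
  + exact: disj0r.
  + exact: disj0l.
  + exact: disj0l.
Qed.

Lemma sum2 (x y : 'I_k.+2) (X Y : {set 'I_k.+2}) : x != y ->
  \sum_(j in [set x; y]) vv j (feas2 x y X Y j) = vv x X + vv y Y.
Proof.
move=> xy; rewrite big_setU1 /=; last by rewrite in_set1.
by rewrite big_set1 !ffunE eqxx eq_sym (negbTE xy) eqxx.
Qed.

Lemma iAnW : (iA \in Wset) = false. Proof. by rewrite inW eqxx. Qed.
Lemma iBnW : (iB \in Wset) = false. Proof. by rewrite inW eqxx andbF. Qed.

Lemma vA : vv iA Aset = alpha. Proof. by rewrite /vv iAnW eqxx subxx. Qed.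
Lemma vB : vv iB Bset = alpha.
Proof. by rewrite /vv iBnW eq_sym (negbTE iAB) subxx. Qed.
Lemma v1 : vv i1 [set i1] = 1. Proof. by rewrite /vv i1W set11. Qed.
Lemma v0 : vv i0 [set i0] = 1. Proof. by rewrite /vv i0W set11. Qed.

Lemma disjA1 : [disjoint Aset & [set i1]].
Proof. by rewrite disjoint_sym disjoints1 /Aset in_setD1 eqxx. Qed.
Lemma disjB0 : [disjoint Bset & [set i0]].
Proof. by rewrite disjoint_sym disjoints1 /Bset in_setD1 eqxx. Qed.

Lemma wSA : alpha + 1 <= wS vv [set iA; i1].
Proof.
have hA1 : iA != i1 by rewrite eq_sym i1A.
have := @wS_ge R k.+2 k.+2 vv [set iA; i1] _ (@feasible2 iA i1 Aset [set i1] hA1 disjA1).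
by rewrite sum2 // vA v1.
Qed.

Lemma wSB : alpha + 1 <= wS vv [set iB; i0].
Proof.
have hB0 : iB != i0 by rewrite eq_sym i0B.
have := @wS_ge R k.+2 k.+2 vv [set iB; i0] _ (@feasible2 iB i0 Bset [set i0] hB0 disjB0).
by rewrite sum2 // vB v0.
Qed.

Lemma i0Z : i0 \notin Z. Proof. by rewrite /Z !in_setD1 eqxx andbF. Qed.
Lemma i1Z : i1 \notin Z. Proof. by rewrite /Z !in_setD1 eqxx. Qed.

Lemma inZ x : x \in Z -> [/\ x != i0, x != i1, x != iA & x != iB].
Proof. by rewrite /Z !in_setD1 inW => /and3P [h1 h0 /andP [hA hB]]. Qed.

Lemma pi_out (p : {ffun 'I_k.+2 -> R}) x : in_core vv p -> x \notin Wset -> p x <= 0.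
Proof.
move=> [p0 hS] xW.
have := hS [set~ x]; rewrite setCK big_set1 wN.
have : k%:R <= wS vv [set~ x].
  have sW : Wset \subset [set~ x].
    by apply/subsetP => y yW; rewrite in_setC1; apply: contraNneq xW => <-.
  apply: le_trans (@wS_ge R k.+2 k.+2 vv [set~ x] _ feas_astar).
  by rewrite sum_astar (setIidPr sW) cardW.
move=> h1 h2; lra.
Qed.

Lemma pi_0 (p : {ffun 'I_k.+2 -> R}) : in_core vv p ->
  p i0 + \sum_(j in Z) p j <= 1/2.
Proof.
move=> [p0 hS].
have := hS [set iA; i1]; rewrite wN.
have := wSA.
have : p i0 + \sum_(j in Z) p j <= \sum_(j in ~: [set iA; i1]) p j.
  rewrite -big_setU1 /=; last exact: i0Z.
  apply: sum_subT => //; apply/subsetP => x; rewrite in_setU1 => /orP [/eqP -> |].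
    by rewrite in_setC in_set2 negb_or i0A i01.
  by move/inZ => [h0 h1 hA hB]; rewrite in_setC in_set2 negb_or hA h1.
rewrite /alpha => h1 h2 h3; lra.
Qed.

Lemma pi_1 (p : {ffun 'I_k.+2 -> R}) : in_core vv p ->
  p i1 + \sum_(j in Z) p j <= 1/2.
Proof.
move=> [p0 hS].
have := hS [set iB; i0]; rewrite wN.
have := wSB.
have : p i1 + \sum_(j in Z) p j <= \sum_(j in ~: [set iB; i0]) p j.
  rewrite -big_setU1 /=; last exact: i1Z.
  apply: sum_subT => //; apply/subsetP => x; rewrite in_setU1 => /orP [/eqP -> |].
    by rewrite in_setC in_set2 negb_or i1B eq_sym i01.
  by move/inZ => [h0 h1 hA hB]; rewrite in_setC in_set2 negb_or hB h0.
rewrite /alpha => h1 h2 h3; lra.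
Qed.

Lemma bound_all (p : {ffun 'I_k.+2 -> R}) : in_core vv p ->
  [/\ p i0 + \sum_(j in Z) p j <= 1/2, p i1 + \sum_(j in Z) p j <= 1/2,
      p iA <= 0, p iB <= 0 & 0 <= \sum_(j in Z) p j].
Proof.
move=> hp; split; [exact: pi_0 | exact: pi_1 | exact: (@pi_out p iA hp (negbT iAnW))
  | exact: (@pi_out p iB hp (negbT iBnW)) | ].
by case: hp => p0 _; apply: sumr_ge0.
Qed.

Lemma MRC_piM : MRC vv piM.
Proof.
split; first exact: core_piM.
move=> p hp; rewrite sum_piM decomp.
case: (@bound_all p hp) => h0 h1 hA hB hZ.
case: hp => p0 _; have := p0 i0; have := p0 i1; lra.
Qed.

Lemma uniq_piM : unique_MRC vv piM.
Proof.
split; first exact: MRC_piM.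
move=> p [hp hmax].
have := hmax _ core_piM; rewrite sum_piM decomp => hs.
case: (@bound_all p hp) => h0 h1 hA hB hZ.
have [p0 _] := hp.
have := p0 i0; have := p0 i1; have := p0 iA; have := p0 iB => g1 g2 g3 g4.
have eZ : \sum_(j in Z) p j = 0 by lra.
have e0 : p i0 = 1/2 by lra.
have e1 : p i1 = 1/2 by lra.
have eA : p iA = 0 by lra.
have eB : p iB = 0 by lra.
have zZ := psumr_eq0P (fun j _ => p0 j) eZ.
apply/ffunP => j; rewrite !ffunE /F0 in_set2.
case: (eqVneq j i0) => [->|n0]; first by [].
case: (eqVneq j i1) => [->|n1]; first by [].
case: (eqVneq j iA) => [->|nA]; first by [].
case: (eqVneq j iB) => [->|nB]; first by [].
by apply: zZ; rewrite /Z !in_setD1 inW n0 n1 nA nB.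
Qed.

Lemma winW : winners astar = Wset.
Proof.
apply/setP => j; rewrite /winners inE ffunE; case: ifP => h //.
by apply/set0Pn; exists j; rewrite set11.
by rewrite eqxx.
Qed.

Lemma zero_set : [set i in winners astar | piM i == 0] = Z.
Proof.
have hne : ((1/2 : R) == 0) = false.
  by apply: gt_eqF; lra.
apply/setP => j; rewrite winW inE ffunE /F0 in_set2 /Z !in_setD1.
case: (eqVneq j i0) => [->|n0]; first by rewrite hne andbF.
case: (eqVneq j i1) => [->|n1]; first by rewrite hne andbF.
by rewrite eqxx andbT.
Qed.

Lemma cardZ : #|Z| = (k - 2)%N.
Proof.
have h1 := cardsD1 i0 Wset; rewrite i0W cardW in h1.
have h2 := cardsD1 i1 (Wset :\ i0); rewrite in_setD1 eq_sym i01 i1W /= in h2.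
rewrite /Z [in RHS]h1 [in RHS]h2.
by rewrite !add1n subSS subSS subn0.
Qed.

Lemma main_sec :
  exists (n m : nat) (v : 'I_n -> {set 'I_m} -> R)
         (a : {ffun 'I_n -> {set 'I_m}}) (piMRC : {ffun 'I_n -> R}),
    valuation_profile v /\
    efficient v a /\
    #|winners a| = k /\
    unique_MRC v piMRC /\
    #|[set i in winners a | piMRC i == 0]| = (k - 2)%N /\
    (forall i, i \in winners a -> piMRC i = 0 ->
       exists pi : {ffun 'I_n -> R}, in_core v pi /\ 0 < pi i).
Proof.
exists k.+2, k.+2, vv, astar, piM.
split; first exact: vp.
split.
  split; first exact: feas_astar.
  rewrite wN; under eq_bigr => j _ do rewrite vastar.
  by rewrite sum_if cardW.
split; first by rewrite winW cardW.
split; first exact: uniq_piM.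
split; first by rewrite zero_set cardZ.
move=> i; rewrite winW => iW _.
exists (piF [set i]); split.
  apply: core_piF; first by rewrite sub1set.
    by rewrite -(cards1 i); apply: subset_leq_card; apply: subsetIr.
  by rewrite -(cards1 i); apply: subset_leq_card; apply: subsetIr.
rewrite ffunE set11; lra.
Qed.

End Constr.

Theorem lemma1 (R : realType) (k : nat) (hk : (2 <= k)%N) :
  exists (n m : nat) (v : 'I_n -> {set 'I_m} -> R)
         (a : {ffun 'I_n -> {set 'I_m}}) (piMRC : {ffun 'I_n -> R}),
    valuation_profile v /\
    efficient v a /\
    #|winners a| = k /\
    unique_MRC v piMRC /\
    #|[set i in winners a | piMRC i == 0]| = (k - 2)%N /\
    (forall i, i \in winners a -> piMRC i = 0 ->
       exists pi : {ffun 'I_n -> R}, in_core v pi /\ 0 < pi i).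
Proof. exact: (@main_sec R k hk). Qed.
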